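(* On $S^3$ with its standard pseudohermitian structure, let $\phi\in C^\infty(S^3)$ be complex with $|\phi|<1$, $F=(1-|\phi|^2)^{-1/2}$, and consider the CR structure spanned by $Z_{\bar1}^\phi=F(Z_{\bar1}+\phi Z_1)$ with the same contact form $\theta$ and coframe $\theta^1_\phi=F(\theta^1-\phi\theta^{\bar1})$. Then its connection form and torsion are $$\theta_1{}^1{}_\phi=\theta_1{}^1-F^{-1}dF-F^{-1}(B_{11}\theta^1+B_{12}\theta^{\bar1}+B_{13}\theta),\qquad A^1{}_{\bar1}{}^\phi=-F^2(\phi_0-4i\phi),$$ where $B_{11}=F^2(-2F_1-F\bar\phi_{\bar1}-\bar\phi F\phi_1-2\bar\phi F_{\bar1})$, $B_{12}=F^2(2|\phi|^2F_{\bar1}+F\phi_1+\phi F\bar\phi_{\bar1}+2\phi F_1)$, $B_{13}=-\bar\phi F^3(\phi_0-4i\phi)$.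
   Context: $S^3=\{|z_1|^2+|z_2|^2=1\}\subset\mathbb{C}^2$, $\theta=\frac{i}{2}(\bar\partial u-\partial u)|_{S^3}$ with $u=|z_1|^2+|z_2|^2-1$; $Z_1=\bar z_2\partial_{z_1}-\bar z_1\partial_{z_2}$, $Z_{\bar1}=\overline{Z_1}$, $\theta^1=z_2dz_1-z_1dz_2$ (so $d\theta=i\theta^1\wedge\theta^{\bar1}$), Reeb field $T=i\sum_j(z_j\partial_{z_j}-\bar z_j\partial_{\bar z_j})$, standard connection form $\theta_1{}^1=-2i\theta$, zero torsion. For a coframe $\{\theta,\vartheta^1,\vartheta^{\bar1}\}$ with $d\theta=i\vartheta^1\wedge\vartheta^{\bar1}$, the connection form $\vartheta_1{}^1$ and torsion $\tau^1=A^1{}_{\bar1}\vartheta^{\bar1}$ are determined by $d\vartheta^1=\vartheta^1\wedge\vartheta_1{}^1+\theta\wedge\tau^1$, $\tau^1\equiv0\bmod\vartheta^{\bar1}$, $\vartheta_1{}^1+\vartheta_{\bar1}{}^{\bar1}=0$. Notation: $\phi_1=Z_1\phi$, $\bar\phi_{\bar1}=Z_{\bar1}\bar\phi$, $F_1=Z_1F$, $F_{\bar1}=Z_{\bar1}F$, $\phi_0=T\phi$. *)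

(* Defs.v *)
From Stdlib Require Import Reals List.
From Coquelicot Require Import Coquelicot.

Open Scope R_scope.

(** Points of C^2 (= R^4) and real vectors of R^4, both encoded as pairs of
    complex numbers (z1, z2). *)
Definition Point := (C * C)%type.

Definition S3 (p : Point) : Prop :=
  (Cmod (fst p)) ^ 2 + (Cmod (snd p)) ^ 2 = 1.

Definition tangent (p v : Point) : Prop :=
  Re (Cplus (Cmult (Cconj (fst p)) (fst v)) (Cmult (Cconj (snd p)) (snd v))) = 0.

Definition shift (p v : Point) (t : R) : Point :=
  (Cplus (fst p) (Cmult (RtoC t) (fst v)), Cplus (snd p) (Cmult (RtoC t) (snd v))).

Definition dd (f : Point -> C) (p v : Point) : C :=
  Cplus (RtoC (Derive (fun t => Re (f (shift p v t))) 0))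
        (Cmult Ci (RtoC (Derive (fun t => Im (f (shift p v t))) 0))).

Definition ex1 : Point := (RtoC 1, RtoC 0).
Definition ey1 : Point := (Ci, RtoC 0).
Definition ex2 : Point := (RtoC 0, RtoC 1).
Definition ey2 : Point := (RtoC 0, Ci).

Definition basis_dir (e : Point) : Prop := e = ex1 \/ e = ey1 \/ e = ex2 \/ e = ey2.

Fixpoint iter_pd (l : list Point) (f : Point -> C) : Point -> C :=
  match l with
  | nil => f
  | e :: l' => fun p => dd (iter_pd l' f) p e
  end.

Definition smooth (f : Point -> C) : Prop :=
  forall l : list Point, List.Forall basis_dir l ->
    (forall p, continuous (iter_pd l f) p) /\
    (forall e p, basis_dir e ->
       ex_derive (fun t => Re (iter_pd l f (shift p e t))) 0 /\
       ex_derive (fun t => Im (iter_pd l f (shift p e t))) 0).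

Definition half : C := RtoC (/ 2).
Definition dz1 (f : Point -> C) (p : Point) : C :=
  Cmult half (Cminus (dd f p ex1) (Cmult Ci (dd f p ey1))).
Definition dz2 (f : Point -> C) (p : Point) : C :=
  Cmult half (Cminus (dd f p ex2) (Cmult Ci (dd f p ey2))).
Definition dzb1 (f : Point -> C) (p : Point) : C :=
  Cmult half (Cplus (dd f p ex1) (Cmult Ci (dd f p ey1))).
Definition dzb2 (f : Point -> C) (p : Point) : C :=
  Cmult half (Cplus (dd f p ex2) (Cmult Ci (dd f p ey2))).

Definition Z1 (f : Point -> C) (p : Point) : C :=
  Cminus (Cmult (Cconj (snd p)) (dz1 f p)) (Cmult (Cconj (fst p)) (dz2 f p)).
Definition Zb1 (f : Point -> C) (p : Point) : C :=
  Cminus (Cmult (snd p) (dzb1 f p)) (Cmult (fst p) (dzb2 f p)).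
Definition Tf (f : Point -> C) (p : Point) : C :=
  Cmult Ci (Cminus (Cplus (Cmult (fst p) (dz1 f p)) (Cmult (snd p) (dz2 f p)))
                   (Cplus (Cmult (Cconj (fst p)) (dzb1 f p))
                          (Cmult (Cconj (snd p)) (dzb2 f p)))).

(** Complex-valued 1-forms on (an open subset of) R^4, given by their values
    omega p v on real vectors v (R-linear in v). *)
Definition cform1 := Point -> Point -> C.

(** theta = (i/2)(dbar u - d u), u = |z1|^2+|z2|^2-1,
    i.e. theta = (i/2) sum_j (z_j dzbar_j - zbar_j dz_j). *)
Definition theta : cform1 := fun p v =>
  Cmult (Cmult Ci half)
    (Cminus (Cplus (Cmult (fst p) (Cconj (fst v))) (Cmult (snd p) (Cconj (snd v))))
            (Cplus (Cmult (Cconj (fst p)) (fst v)) (Cmult (Cconj (snd p)) (snd v)))).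

Definition theta1 : cform1 := fun p v =>
  Cminus (Cmult (snd p) (fst v)) (Cmult (fst p) (snd v)).
Definition thetab1 : cform1 := fun p v => Cconj (theta1 p v).

Definition theta11 : cform1 := fun p v => Cmult (Copp (Cmult (RtoC 2) Ci)) (theta p v).

(** Wedge product and exterior derivative (evaluated on constant vectors). *)
Definition wedge (a b : cform1) (p v w : Point) : C :=
  Cminus (Cmult (a p v) (b p w)) (Cmult (a p w) (b p v)).
Definition ext_d (a : cform1) (p v w : Point) : C :=
  Cminus (dd (fun q => a q w) p v) (dd (fun q => a q v) p w).

Definition is_connection_torsion (th th1 om : cform1) (A : Point -> C) : Prop :=
  forall p, S3 p -> forall v w, tangent p v -> tangent p w ->
    ext_d th1 p v w =
      Cplus (wedge th1 om p v w) (wedge th (fun q u => Cmult (A q) (Cconj (th1 q u))) p v w)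
    /\ Cplus (om p v) (Cconj (om p v)) = RtoC 0.

Definition Fphi (phi : Point -> C) : Point -> C := fun p =>
  RtoC (/ sqrt (1 - (Cmod (phi p)) ^ 2)).

Definition theta1_phi (phi : Point -> C) : cform1 := fun p v =>
  Cmult (Fphi phi p) (Cminus (theta1 p v) (Cmult (phi p) (thetab1 p v))).

Definition phibar (phi : Point -> C) : Point -> C := fun p => Cconj (phi p).

Definition B11 (phi : Point -> C) (p : Point) : C :=
  let F := Fphi phi p in
  Cmult (Cmult F F)
   (Cminus (Cminus (Cminus (Copp (Cmult (RtoC 2) (Z1 (Fphi phi) p)))
                           (Cmult F (Zb1 (phibar phi) p)))
                   (Cmult (Cmult (phibar phi p) F) (Z1 phi p)))
           (Cmult (Cmult (RtoC 2) (phibar phi p)) (Zb1 (Fphi phi) p))).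

Definition B12 (phi : Point -> C) (p : Point) : C :=
  let F := Fphi phi p in
  Cmult (Cmult F F)
   (Cplus (Cplus (Cplus (Cmult (Cmult (RtoC 2) (RtoC ((Cmod (phi p)) ^ 2))) (Zb1 (Fphi phi) p))
                        (Cmult F (Z1 phi p)))
                 (Cmult (Cmult (phi p) F) (Zb1 (phibar phi) p)))
          (Cmult (Cmult (RtoC 2) (phi p)) (Z1 (Fphi phi) p))).

Definition phi0m (phi : Point -> C) (p : Point) : C :=
  Cminus (Tf phi p) (Cmult (Cmult (RtoC 4) Ci) (phi p)).

Definition B13 (phi : Point -> C) (p : Point) : C :=
  let F := Fphi phi p in
  Copp (Cmult (Cmult (phibar phi p) (Cmult F (Cmult F F))) (phi0m phi p)).

Definition omega_phi (phi : Point -> C) : cform1 := fun p v =>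
  Cminus (Cminus (theta11 p v) (Cmult (Cinv (Fphi phi p)) (dd (Fphi phi) p v)))
         (Cmult (Cinv (Fphi phi p))
                (Cplus (Cplus (Cmult (B11 phi p) (theta1 p v))
                              (Cmult (B12 phi p) (thetab1 p v)))
                       (Cmult (B13 phi p) (theta p v)))).

Definition A_phi (phi : Point -> C) (p : Point) : C :=
  Copp (Cmult (Cmult (Fphi phi p) (Fphi phi p)) (phi0m phi p)).

(* Main.v *)
Require Import Defs.
From Stdlib Require Import Reals.
From Stdlib Require Import Lra List Nsatz.
From Coquelicot Require Import Coquelicot.

Open Scope R_scope.

Lemma ballR (x y e : R) : ball x e y <-> Rabs (y - x) < e.
Proof. unfold ball; simpl; unfold AbsRing_ball, abs, minus, plus, opp; simpl. tauto. Qed.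

Definition cder (f : Point -> C) (p v : Point) (d : C) : Prop :=
  is_derive (fun t => Re (f (shift p v t))) 0 (Re d) /\
  is_derive (fun t => Im (f (shift p v t))) 0 (Im d).

Lemma is_derive_val (f : R -> R) x l l' : is_derive f x l -> l = l' -> is_derive f x l'.
Proof. intros H ->; exact H. Qed.

Lemma shift0 p v : shift p v 0 = p.
Proof.
  destruct p as [[a b] [c d]]; destruct v as [[e g] [h k]].
  unfold shift, Cplus, Cmult, RtoC; simpl. f_equal; f_equal; ring.
Qed.

Lemma cder_dd f p v d : cder f p v d -> dd f p v = d.
Proof.
  intros [H1 H2]. unfold dd.
  assert (E1 : Derive (fun t => Re (f (shift p v t))) 0 = Re d) by (apply is_derive_unique; exact H1).
  assert (E2 : Derive (fun t => Im (f (shift p v t))) 0 = Im d) by (apply is_derive_unique; exact H2).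
  rewrite E1, E2.
  destruct d as [a b]. unfold Cplus, Cmult, Ci, RtoC, Re, Im; simpl.
  apply injective_projections; simpl; ring.
Qed.

Lemma cder_plus f g p v df dg : cder f p v df -> cder g p v dg ->
  cder (fun q => Cplus (f q) (g q)) p v (Cplus df dg).
Proof.
  intros [H1 H2] [H3 H4]; split; simpl.
  - apply (is_derive_plus _ _ _ _ _ H1 H3).
  - apply (is_derive_plus _ _ _ _ _ H2 H4).
Qed.

Lemma cder_opp f p v df : cder f p v df ->
  cder (fun q => Copp (f q)) p v (Copp df).
Proof.
  intros [H1 H2]; split; simpl.
  - apply (is_derive_opp _ _ _ H1).
  - apply (is_derive_opp _ _ _ H2).
Qed.

Lemma cder_minus f g p v df dg : cder f p v df -> cder g p v dg ->
  cder (fun q => Cminus (f q) (g q)) p v (Cminus df dg).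
Proof.
  intros H1 H2. unfold Cminus. apply cder_plus; auto. apply cder_opp; auto.
Qed.

Lemma cder_conj f p v df : cder f p v df ->
  cder (fun q => Cconj (f q)) p v (Cconj df).
Proof.
  intros [H1 H2]; split; simpl; auto.
  apply (is_derive_opp _ _ _ H2).
Qed.


Lemma is_derive_Rmult (f g : R -> R) x df dg : is_derive f x df -> is_derive g x dg ->
  is_derive (fun t => f t * g t) x (df * g x + f x * dg).
Proof. intros H H0. exact (is_derive_mult f g x df dg H H0 (fun n m => Rmult_comm n m)). Qed.
Lemma cder_mult f g p v df dg : cder f p v df -> cder g p v dg ->
  cder (fun q => Cmult (f q) (g q)) p v (Cplus (Cmult df (g p)) (Cmult (f p) dg)).
Proof.
  intros [H1 H2] [H3 H4].
  pose proof (shift0 p v) as E.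
  split.
  - eapply is_derive_val.
    + apply (is_derive_ext (fun t => Re (f (shift p v t)) * Re (g (shift p v t)) - Im (f (shift p v t)) * Im (g (shift p v t)))).
      { intro t; reflexivity. }
      apply (is_derive_minus (fun t => Re (f (shift p v t)) * Re (g (shift p v t)))
              (fun t => Im (f (shift p v t)) * Im (g (shift p v t)))).
      * exact (is_derive_Rmult _ _ _ _ _ H1 H3).
      * exact (is_derive_Rmult _ _ _ _ _ H2 H4).
    + cbv beta. rewrite E. simpl. unfold minus, plus, opp, Re, Im; simpl. ring.
  - eapply is_derive_val.
    + apply (is_derive_ext (fun t => Re (f (shift p v t)) * Im (g (shift p v t)) + Im (f (shift p v t)) * Re (g (shift p v t)))).
      { intro t; reflexivity. }
      apply (is_derive_plus (fun t => Re (f (shift p v t)) * Im (g (shift p v t)))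
              (fun t => Im (f (shift p v t)) * Re (g (shift p v t)))).
      * exact (is_derive_Rmult _ _ _ _ _ H1 H4).
      * exact (is_derive_Rmult _ _ _ _ _ H2 H3).
    + cbv beta. rewrite E. simpl. unfold minus, plus, opp, Re, Im; simpl. ring.
Qed.

Lemma cder_const (c : C) p v : cder (fun _ => c) p v (RtoC 0).
Proof. split; simpl; (eapply is_derive_val; [apply is_derive_const | reflexivity]). Qed.

Lemma cder_fst p v : cder (fun q => fst q) p v (fst v).
Proof.
  split; simpl.
  - eapply is_derive_val.
    + apply (is_derive_ext (fun t => fst (fst p) + (t * fst (fst v) - 0 * snd (fst v)))).
      { intro; reflexivity. }
      auto_derive; auto.
    + unfold Re, Im; cbn; ring.
  - eapply is_derive_val.
    + apply (is_derive_ext (fun t => snd (fst p) + (t * snd (fst v) + 0 * fst (fst v)))).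
      { intro; reflexivity. }
      auto_derive; auto.
    + unfold Re, Im; cbn; ring.
Qed.

Lemma cder_snd p v : cder (fun q => snd q) p v (snd v).
Proof.
  split; simpl.
  - eapply is_derive_val.
    + apply (is_derive_ext (fun t => fst (snd p) + (t * fst (snd v) - 0 * snd (snd v)))).
      { intro; reflexivity. }
      auto_derive; auto.
    + unfold Re, Im; cbn; ring.
  - eapply is_derive_val.
    + apply (is_derive_ext (fun t => snd (snd p) + (t * snd (snd v) + 0 * fst (snd v)))).
      { intro; reflexivity. }
      auto_derive; auto.
    + unfold Re, Im; cbn; ring.
Qed.

Lemma shift_shift q e s u : shift (shift q e s) e u = shift q e (s + u).
Proof.
  destruct q as [[a b] [c d]]; destruct e as [[e1 e2] [e3 e4]].
  unfold shift, Cplus, Cmult, RtoC; simpl. f_equal; f_equal; ring.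
Qed.

Lemma is_derive_R_shift (h : R -> R) s L :
  is_derive (fun u => h (s + u)) 0 L -> is_derive h s L.
Proof.
  intro H.
  apply (is_derive_ext (fun x => (fun u => h (s + u)) (x + - s))).
  { intro x. cbv beta. f_equal. ring. }
  eapply is_derive_val.
  - apply (is_derive_comp (fun u => h (s + u)) (fun x => x + - s)).
    + replace (s + - s) with 0 by ring. exact H.
    + auto_derive; auto.
  - simpl. unfold scal; simpl. unfold mult; simpl. ring.
Qed.

Lemma mvt_step (g : Point -> R) (Dg : Point -> Point -> R) q e c :
  (forall q e, basis_dir e -> is_derive (fun t => g (shift q e t)) 0 (Dg q e)) ->
  basis_dir e ->
  exists th, Rabs th <= Rabs c /\ g (shift q e c) - g q = c * Dg (shift q e th) e.
Proof.
  intros Hd He.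
  assert (Hh : forall s, is_derive (fun s => g (shift q e s)) s (Dg (shift q e s) e)).
  { intro s. apply is_derive_R_shift.
    apply (is_derive_ext (fun u => g (shift (shift q e s) e u))).
    { intro u. rewrite shift_shift. reflexivity. }
    apply Hd; auto. }
  destruct (MVT_gen (fun s => g (shift q e s)) 0 c (fun s => Dg (shift q e s) e)) as [th [Hth Heq]].
  - intros x _. apply Hh.
  - intros x _. apply derivable_continuous_pt.
    exists (Dg (shift q e x) e). apply is_derive_Reals. apply Hh.
  - exists th. split.
    + revert Hth. apply Rmin_case; apply Rmax_case; intros Hth;
      unfold Rabs; repeat destruct Rcase_abs; lra.
    + cbv beta in Heq. rewrite shift0 in Heq. rewrite Heq. ring.
Qed.

Definition near (p q : Point) (d : R) : Prop :=
  Rabs (fst (fst q) - fst (fst p)) < d /\ Rabs (snd (fst q) - snd (fst p)) < d /\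
  Rabs (fst (snd q) - fst (snd p)) < d /\ Rabs (snd (snd q) - snd (snd p)) < d.

Lemma sh_ex1 q s : shift q ex1 s = ((fst (fst q) + s, snd (fst q)), snd q).
Proof. destruct q as [[a b] [c d]]. unfold shift, ex1, Cplus, Cmult, RtoC; simpl. f_equal; f_equal; f_equal; ring. Qed.
Lemma sh_ey1 q s : shift q ey1 s = ((fst (fst q), snd (fst q) + s), snd q).
Proof. destruct q as [[a b] [c d]]. unfold shift, ey1, Ci, Cplus, Cmult, RtoC; simpl. f_equal; f_equal; f_equal; ring. Qed.
Lemma sh_ex2 q s : shift q ex2 s = (fst q, (fst (snd q) + s, snd (snd q))).
Proof. destruct q as [[a b] [c d]]. unfold shift, ex2, Cplus, Cmult, RtoC; simpl. f_equal; f_equal; f_equal; ring. Qed.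
Lemma sh_ey2 q s : shift q ey2 s = (fst q, (fst (snd q), snd (snd q) + s)).
Proof. destruct q as [[a b] [c d]]. unfold shift, ey2, Ci, Cplus, Cmult, RtoC; simpl. f_equal; f_equal; f_equal; ring. Qed.

Lemma bd_le u w d : Rabs u <= w -> w < d -> Rabs u < d.
Proof. intros; lra. Qed.

Lemma C1_real (g : Point -> R) (Dg : Point -> Point -> R) p v :
  (forall q e, basis_dir e -> is_derive (fun t => g (shift q e t)) 0 (Dg q e)) ->
  (forall e, basis_dir e -> forall eps, 0 < eps -> exists d, 0 < d /\
       forall q, near p q d -> Rabs (Dg q e - Dg p e) < eps) ->
  is_derive (fun t => g (shift p v t)) 0
    (fst (fst v) * Dg p ex1 + snd (fst v) * Dg p ey1 + fst (snd v) * Dg p ex2 + snd (snd v) * Dg p ey2).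
Proof.
  intros Hd Hc.
  destruct v as [[a1 b1] [a2 b2]]; simpl.
  apply is_derive_Reals. intros eps Heps.
  set (M := 1 + Rabs a1 + Rabs b1 + Rabs a2 + Rabs b2).
  assert (HM : 1 <= M) by (unfold M; pose proof (Rabs_pos a1); pose proof (Rabs_pos b1);
     pose proof (Rabs_pos a2); pose proof (Rabs_pos b2); lra).
  set (eps' := eps / (2 * M)).
  assert (He' : 0 < eps') by (unfold eps'; apply Rdiv_lt_0_compat; lra).
  destruct (Hc ex1 (or_introl eq_refl) eps' He') as [d1 [Hd1 Hc1]].
  destruct (Hc ey1 (or_intror (or_introl eq_refl)) eps' He') as [d2 [Hd2 Hc2]].
  destruct (Hc ex2 (or_intror (or_intror (or_introl eq_refl))) eps' He') as [d3 [Hd3 Hc3]].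
  destruct (Hc ey2 (or_intror (or_intror (or_intror eq_refl))) eps' He') as [d4 [Hd4 Hc4]].
  set (d0 := Rmin (Rmin d1 d2) (Rmin d3 d4)).
  assert (Hd0 : 0 < d0) by (unfold d0; repeat apply Rmin_case; lra).
  assert (Hd01 : d0 <= d1) by (unfold d0; eapply Rle_trans; [apply Rmin_l|apply Rmin_l]).
  assert (Hd02 : d0 <= d2) by (unfold d0; eapply Rle_trans; [apply Rmin_l|apply Rmin_r]).
  assert (Hd03 : d0 <= d3) by (unfold d0; eapply Rle_trans; [apply Rmin_r|apply Rmin_l]).
  assert (Hd04 : d0 <= d4) by (unfold d0; eapply Rle_trans; [apply Rmin_r|apply Rmin_r]).
  assert (Hdel : 0 < d0 / M) by (apply Rdiv_lt_0_compat; lra).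
  exists (mkposreal _ Hdel). intros h Hh0 Hh. simpl in Hh.
  assert (HhM : Rabs h * M < d0).
  { apply (Rmult_lt_compat_r M) in Hh; [|lra]. unfold Rdiv in Hh.
    rewrite Rmult_assoc, Rinv_l in Hh; lra. }
  assert (Hb : forall c, Rabs c <= M - 1 -> Rabs (h * c) < d0).
  { intros c Hc0. rewrite Rabs_mult. pose proof (Rabs_pos h).
    apply Rle_lt_trans with (Rabs h * M); [|exact HhM].
    apply Rmult_le_compat_l; lra. }
  assert (Ha1 : Rabs a1 <= M - 1) by (unfold M; pose proof (Rabs_pos b1); pose proof (Rabs_pos a2); pose proof (Rabs_pos b2); lra).
  assert (Hb1 : Rabs b1 <= M - 1) by (unfold M; pose proof (Rabs_pos a1); pose proof (Rabs_pos a2); pose proof (Rabs_pos b2); lra).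
  assert (Ha2 : Rabs a2 <= M - 1) by (unfold M; pose proof (Rabs_pos b1); pose proof (Rabs_pos a1); pose proof (Rabs_pos b2); lra).
  assert (Hb2 : Rabs b2 <= M - 1) by (unfold M; pose proof (Rabs_pos b1); pose proof (Rabs_pos a2); pose proof (Rabs_pos a1); lra).
  set (q1 := shift p ex1 (h * a1)).
  set (q2 := shift q1 ey1 (h * b1)).
  set (q3 := shift q2 ex2 (h * a2)).
  set (q4 := shift q3 ey2 (h * b2)).
  assert (Eq4 : shift p (@pair C C (a1, b1) (a2, b2)) (0 + h) = q4).
  { unfold q4, q3, q2, q1. rewrite sh_ey2, sh_ex2, sh_ey1, sh_ex1.
    destruct p as [[x1 y1] [x2 y2]]. unfold shift, Cplus, Cmult, RtoC; simpl. f_equal; f_equal; ring. }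
  destruct (mvt_step g Dg p ex1 (h * a1) Hd (or_introl eq_refl)) as [t1 [Ht1 E1]].
  destruct (mvt_step g Dg q1 ey1 (h * b1) Hd (or_intror (or_introl eq_refl))) as [t2 [Ht2 E2]].
  destruct (mvt_step g Dg q2 ex2 (h * a2) Hd (or_intror (or_intror (or_introl eq_refl)))) as [t3 [Ht3 E3]].
  destruct (mvt_step g Dg q3 ey2 (h * b2) Hd (or_intror (or_intror (or_intror eq_refl)))) as [t4 [Ht4 E4]].
  fold q1 in E1. fold q2 in E2. fold q3 in E3. fold q4 in E4.
  assert (Hz : forall d, 0 < d -> Rabs 0 < d) by (intros; rewrite Rabs_R0; lra).
  assert (N1 : near p (shift p ex1 t1) d1).
  { unfold near; rewrite sh_ex1; simpl.
    replace (fst (fst p) + t1 - fst (fst p)) with t1 by ring.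
    repeat rewrite Rminus_diag. repeat split; try (apply Hz; lra).
    apply Rle_lt_trans with (Rabs (h * a1)); [lra|]. apply Rlt_le_trans with d0; auto. }
  assert (N2 : near p (shift q1 ey1 t2) d2).
  { unfold near, q1; rewrite sh_ey1, sh_ex1; simpl.
    replace (fst (fst p) + h * a1 - fst (fst p)) with (h * a1) by ring.
    replace (snd (fst p) + t2 - snd (fst p)) with t2 by ring.
    repeat rewrite Rminus_diag. repeat split; try (apply Hz; lra).
    - apply Rlt_le_trans with d0; auto.
    - apply Rle_lt_trans with (Rabs (h * b1)); [lra|]. apply Rlt_le_trans with d0; auto. }
  assert (N3 : near p (shift q2 ex2 t3) d3).
  { unfold near, q2, q1; rewrite sh_ex2, sh_ey1, sh_ex1; simpl.
    replace (fst (fst p) + h * a1 - fst (fst p)) with (h * a1) by ring.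
    replace (snd (fst p) + h * b1 - snd (fst p)) with (h * b1) by ring.
    replace (fst (snd p) + t3 - fst (snd p)) with t3 by ring.
    repeat rewrite Rminus_diag. repeat split; try (apply Hz; lra).
    - apply Rlt_le_trans with d0; auto.
    - apply Rlt_le_trans with d0; auto.
    - apply Rle_lt_trans with (Rabs (h * a2)); [lra|]. apply Rlt_le_trans with d0; auto. }
  assert (N4 : near p (shift q3 ey2 t4) d4).
  { unfold near, q3, q2, q1; rewrite sh_ey2, sh_ex2, sh_ey1, sh_ex1; simpl.
    replace (fst (fst p) + h * a1 - fst (fst p)) with (h * a1) by ring.
    replace (snd (fst p) + h * b1 - snd (fst p)) with (h * b1) by ring.
    replace (fst (snd p) + h * a2 - fst (snd p)) with (h * a2) by ring.
    replace (snd (snd p) + t4 - snd (snd p)) with t4 by ring.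
    repeat split.
    - apply Rlt_le_trans with d0; auto.
    - apply Rlt_le_trans with d0; auto.
    - apply Rlt_le_trans with d0; auto.
    - apply Rle_lt_trans with (Rabs (h * b2)); [lra|]. apply Rlt_le_trans with d0; auto. }
  specialize (Hc1 _ N1). specialize (Hc2 _ N2). specialize (Hc3 _ N3). specialize (Hc4 _ N4).
  rewrite Eq4. replace (shift p (@pair C C (a1, b1) (a2, b2)) 0) with p by (symmetry; apply shift0).
  replace ((g q4 - g p) / h - (a1 * Dg p ex1 + b1 * Dg p ey1 + a2 * Dg p ex2 + b2 * Dg p ey2))
    with (a1 * (Dg (shift p ex1 t1) ex1 - Dg p ex1) + b1 * (Dg (shift q1 ey1 t2) ey1 - Dg p ey1)
        + a2 * (Dg (shift q2 ex2 t3) ex2 - Dg p ex2) + b2 * (Dg (shift q3 ey2 t4) ey2 - Dg p ey2)).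
  2:{ replace (g q4 - g p) with ((g q4 - g q3) + (g q3 - g q2) + (g q2 - g q1) + (g q1 - g p)) by ring.
      rewrite E1, E2, E3, E4. field. auto. }
  set (u1 := Dg (shift p ex1 t1) ex1 - Dg p ex1) in *.
  set (u2 := Dg (shift q1 ey1 t2) ey1 - Dg p ey1) in *.
  set (u3 := Dg (shift q2 ex2 t3) ex2 - Dg p ex2) in *.
  set (u4 := Dg (shift q3 ey2 t4) ey2 - Dg p ey2) in *.
  pose proof (Rabs_triang (a1*u1 + b1*u2 + a2*u3) (b2*u4)).
  pose proof (Rabs_triang (a1*u1 + b1*u2) (a2*u3)).
  pose proof (Rabs_triang (a1*u1) (b1*u2)).
  rewrite !Rabs_mult in *.
  assert (P1 : Rabs a1 * Rabs u1 <= Rabs a1 * eps') by (apply Rmult_le_compat_l; [apply Rabs_pos|lra]).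
  assert (P2 : Rabs b1 * Rabs u2 <= Rabs b1 * eps') by (apply Rmult_le_compat_l; [apply Rabs_pos|lra]).
  assert (P3 : Rabs a2 * Rabs u3 <= Rabs a2 * eps') by (apply Rmult_le_compat_l; [apply Rabs_pos|lra]).
  assert (P4 : Rabs b2 * Rabs u4 <= Rabs b2 * eps') by (apply Rmult_le_compat_l; [apply Rabs_pos|lra]).
  assert (S1 : Rabs a1 * eps' + Rabs b1 * eps' + Rabs a2 * eps' + Rabs b2 * eps' = (M - 1) * eps') by (unfold M; ring).
  assert (S2 : M * eps' = eps / 2) by (unfold eps'; field; lra).
  lra.
Qed.

Lemma cont_near (f : Point -> C) p : continuous f p ->
  forall eps, 0 < eps -> exists d, 0 < d /\ forall q, near p q d ->
    Rabs (Re (f q) - Re (f p)) < eps /\ Rabs (Im (f q) - Im (f p)) < eps.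
Proof.
  intros H eps Heps. unfold continuous in H. rewrite filterlim_locally in H.
  destruct (H (mkposreal _ Heps)) as [d Hd].
  exists d. split; [apply cond_pos|].
  intros q [N1 [N2 [N3 N4]]].
  assert (B : ball p d q).
  { unfold ball; simpl; unfold prod_ball; simpl. unfold ball; simpl; unfold prod_ball; simpl.
    rewrite !ballR. tauto. }
  specialize (Hd q B). revert Hd.
  unfold ball; simpl; unfold prod_ball; simpl. rewrite !ballR. simpl. tauto.
Qed.

Definition Lin (f : Point -> C) (p v : Point) : C :=
  Cplus (Cplus (Cplus (Cmult (RtoC (fst (fst v))) (dd f p ex1)) (Cmult (RtoC (snd (fst v))) (dd f p ey1)))
               (Cmult (RtoC (fst (snd v))) (dd f p ex2))) (Cmult (RtoC (snd (snd v))) (dd f p ey2)).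

Lemma Re_dd f q e : Re (dd f q e) = Derive (fun t => Re (f (shift q e t))) 0.
Proof. unfold dd, Cplus, Cmult, Ci, RtoC, Re, Im; simpl. ring. Qed.
Lemma Im_dd f q e : Im (dd f q e) = Derive (fun t => Im (f (shift q e t))) 0.
Proof. unfold dd, Cplus, Cmult, Ci, RtoC, Re, Im; simpl. ring. Qed.

Lemma smooth_cder (phi : Point -> C) : smooth phi -> forall p v, cder phi p v (Lin phi p v).
Proof.
  intros Hs p v.
  assert (H0 := Hs nil (Forall_nil _)). destruct H0 as [_ Hder]. simpl in Hder.
  assert (Hcont : forall e, basis_dir e -> continuous (fun q => dd phi q e) p).
  { intros e He. destruct (Hs (e :: nil) (Forall_cons _ He (Forall_nil _))) as [Hc _].
    apply Hc. }
  split.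
  - eapply is_derive_val.
    + apply (C1_real (fun q => Re (phi q)) (fun q e => Derive (fun t => Re (phi (shift q e t))) 0)).
      * intros q e He. apply Derive_correct. apply (Hder e q He).
      * intros e He eps Heps. destruct (cont_near _ p (Hcont e He) eps Heps) as [d [Hd Hq]].
        exists d; split; auto. intros q Hn. destruct (Hq q Hn) as [R1 _].
        rewrite !Re_dd in R1. exact R1.
    + unfold Lin. rewrite <- !Re_dd. unfold Cplus, Cmult, RtoC, Re, Im; simpl. ring.
  - eapply is_derive_val.
    + apply (C1_real (fun q => Im (phi q)) (fun q e => Derive (fun t => Im (phi (shift q e t))) 0)).
      * intros q e He. apply Derive_correct. apply (Hder e q He).
      * intros e He eps Heps. destruct (cont_near _ p (Hcont e He) eps Heps) as [d [Hd Hq]].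
        exists d; split; auto. intros q Hn. destruct (Hq q Hn) as [_ R1].
        rewrite !Im_dd in R1. exact R1.
    + unfold Lin. rewrite <- !Im_dd. unfold Cplus, Cmult, RtoC, Re, Im; simpl. ring.
Qed.

Definition fval (phi : Point -> C) (p : Point) : R := / sqrt (1 - (Cmod (phi p)) ^ 2).

Lemma cder_F (phi : Point -> C) p v d : Cmod (phi p) < 1 -> cder phi p v d ->
  cder (Fphi phi) p v (RtoC (fval phi p ^ 3 * (Re (phi p) * Re d + Im (phi p) * Im d))).
Proof.
  intros Hlt [H1 H2].
  pose proof (Cmod_ge_0 (phi p)). pose proof (Cmod2_alt (phi p)).
  assert (Hm : 0 < 1 - (Re (phi p) * Re (phi p) + Im (phi p) * Im (phi p))) by nra.
  assert (Hs : 0 < sqrt (1 - (Re (phi p) * Re (phi p) + Im (phi p) * Im (phi p)))) by (apply sqrt_lt_R0; auto).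
  pose proof (shift0 p v) as E.
  split.
  - simpl. eapply is_derive_val.
    + apply (is_derive_ext (fun t => / sqrt (1 - (Re (phi (shift p v t)) * Re (phi (shift p v t)) + Im (phi (shift p v t)) * Im (phi (shift p v t)))))).
      { intro t. unfold Fphi. cbv beta. pose proof (Cmod2_alt (phi (shift p v t))) as HC. simpl in HC |- *. do 2 f_equal. nra. }
      apply is_derive_inv.
      * apply is_derive_sqrt.
        -- apply (is_derive_minus (fun _ => 1) (fun t => Re (phi (shift p v t)) * Re (phi (shift p v t)) + Im (phi (shift p v t)) * Im (phi (shift p v t)))).
           ++ apply is_derive_const.
           ++ apply (is_derive_plus (fun t => Re (phi (shift p v t)) * Re (phi (shift p v t))) (fun t => Im (phi (shift p v t)) * Im (phi (shift p v t)))).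
              ** exact (is_derive_Rmult _ _ _ _ _ H1 H1).
              ** exact (is_derive_Rmult _ _ _ _ _ H2 H2).
        -- cbv beta. rewrite E. exact Hm.
      * cbv beta. rewrite E. apply Rgt_not_eq. exact Hs.
    + cbv beta. rewrite E. unfold fval. rewrite Cmod2_alt.
      replace (Re (phi p) ^ 2 + Im (phi p) ^ 2) with (Re (phi p) * Re (phi p) + Im (phi p) * Im (phi p)) by ring.
      unfold minus, plus, opp, zero; simpl.
      field. apply Rgt_not_eq. exact Hs.
  - simpl. eapply is_derive_val; [apply is_derive_const| reflexivity].
Qed.
Lemma S3_real p : S3 p -> fst (fst p) ^ 2 + snd (fst p) ^ 2 + fst (snd p) ^ 2 + snd (snd p) ^ 2 = 1.
Proof. unfold S3. rewrite !Cmod2_alt. unfold Re, Im. lra. Qed.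

Lemma param1 p v : S3 p -> tangent p v ->
  fst v = Cplus (Cmult (theta1 p v) (Cconj (snd p))) (Cmult (Cmult Ci (theta p v)) (fst p)).
Proof.
  intros Hs Ht. apply S3_real in Hs.
  destruct p as [[x1 y1] [x2 y2]], v as [[a b] [c d]].
  unfold tangent in Ht. unfold theta1, theta, half, Cplus, Cminus, Cmult, Copp, Cconj, Ci, RtoC, Re, Im in *; simpl in *.
  assert (H2 : 2 * / 2 = 1) by field. set (hh := / 2) in *.
  apply injective_projections; simpl; nsatz.
Qed.

Lemma param2 p v : S3 p -> tangent p v ->
  snd v = Cplus (Copp (Cmult (theta1 p v) (Cconj (fst p)))) (Cmult (Cmult Ci (theta p v)) (snd p)).
Proof.
  intros Hs Ht. apply S3_real in Hs.
  destruct p as [[x1 y1] [x2 y2]], v as [[a b] [c d]].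
  unfold tangent in Ht. unfold theta1, theta, half, Cplus, Cminus, Cmult, Copp, Cconj, Ci, RtoC, Re, Im in *; simpl in *.
  assert (H2 : 2 * / 2 = 1) by field. set (hh := / 2) in *.
  apply injective_projections; simpl; nsatz.
Qed.
Ltac csplit_all :=
  unfold Lin, Z1, Zb1, Tf, dz1, dz2, dzb1, dzb2, theta1, thetab1, theta, half, ex1, ey1, ex2, ey2,
    Cplus, Cminus, Cmult, Copp, Cconj, Ci, RtoC, Re, Im in *; simpl in *.

Ltac csplit_cbn :=
  unfold Lin, Z1, Zb1, Tf, dz1, dz2, dzb1, dzb2, theta1, thetab1, theta, half, ex1, ey1, ex2, ey2 in *;
  cbn [fst snd Cplus Cminus Cmult Copp Cconj Ci RtoC Re Im] in *.

Lemma decomp f p v : S3 p -> tangent p v ->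
  Lin f p v = Cplus (Cplus (Cmult (Z1 f p) (theta1 p v)) (Cmult (Zb1 f p) (thetab1 p v)))
                    (Cmult (Tf f p) (theta p v)).
Proof.
  intros Hs Ht. apply S3_real in Hs.
  destruct (dd f p ex1) as [d1 d2] eqn:E1.
  destruct (dd f p ey1) as [d3 d4] eqn:E2.
  destruct (dd f p ex2) as [d5 d6] eqn:E3.
  destruct (dd f p ey2) as [d7 d8] eqn:E4.
  unfold Lin, Z1, Zb1, Tf, dz1, dz2, dzb1, dzb2. rewrite E1, E2, E3, E4. clear E1 E2 E3 E4.
  destruct p as [[x1 y1] [x2 y2]], v as [[a b] [c d]].
  unfold tangent in Ht. csplit_all.
  assert (H2 : 2 * / 2 = 1) by field. set (hh := / 2) in *.
  apply injective_projections; simpl; nsatz.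
Qed.

Lemma theta_real p v : Cconj (theta p v) = theta p v.
Proof.
  destruct p as [[x1 y1] [x2 y2]], v as [[a b] [c d]]. csplit_all.
  apply injective_projections; simpl; field.
Qed.

Lemma theta1_vw p v w : S3 p -> tangent p v -> tangent p w ->
  theta1 v w = Copp (Cmult Ci (Cminus (Cmult (theta1 p v) (theta p w)) (Cmult (theta p v) (theta1 p w)))).
Proof.
  intros Hs Hv Hw. apply S3_real in Hs.
  destruct p as [[x1 y1] [x2 y2]], v as [[a b] [c d]], w as [[e f] [g h]].
  unfold tangent in Hv, Hw. csplit_all.
  assert (H2 : 2 * / 2 = 1) by field. set (hh := / 2) in *.
  apply injective_projections; simpl; nsatz.
Qed.

Lemma Cconj_plus a b : Cconj (Cplus a b) = Cplus (Cconj a) (Cconj b).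
Proof. destruct a, b; csplit_all; apply injective_projections; simpl; ring. Qed.
Lemma Cconj_minus a b : Cconj (Cminus a b) = Cminus (Cconj a) (Cconj b).
Proof. destruct a, b; csplit_all; apply injective_projections; simpl; ring. Qed.
Lemma Cconj_mult a b : Cconj (Cmult a b) = Cmult (Cconj a) (Cconj b).
Proof. destruct a, b; csplit_all; apply injective_projections; simpl; ring. Qed.
Lemma Cconj_opp a : Cconj (Copp a) = Copp (Cconj a).
Proof. destruct a; csplit_all; apply injective_projections; simpl; ring. Qed.
Lemma Cconj_conj a : Cconj (Cconj a) = a.
Proof. destruct a; csplit_all; apply injective_projections; simpl; ring. Qed.
Lemma Cconj_RtoC r : Cconj (RtoC r) = RtoC r.
Proof. csplit_all; apply injective_projections; simpl; ring. Qed.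
Lemma Cconj_Ci : Cconj Ci = Copp Ci.
Proof. csplit_all; apply injective_projections; simpl; ring. Qed.
Lemma Cconj_inv a : Cconj (Cinv a) = Cinv (Cconj a).
Proof. destruct a as [x y]; unfold Cinv, Cconj; simpl. apply injective_projections; simpl.
  - replace (- y * (- y * 1)) with (y * (y * 1)) by ring. reflexivity.
  - replace (- y * (- y * 1)) with (y * (y * 1)) by ring. unfold Rdiv; ring. Qed.

Lemma Zb1_conj g f p : (forall e, basis_dir e -> dd g p e = Cconj (dd f p e)) ->
  Zb1 g p = Cconj (Z1 f p).
Proof.
  intro H.
  unfold Z1, Zb1, dz1, dz2, dzb1, dzb2.
  rewrite !H by (unfold basis_dir; tauto). clear H.
  destruct (dd f p ex1), (dd f p ey1), (dd f p ex2), (dd f p ey2).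
  destruct p as [[x1 y1] [x2 y2]]. csplit_all.
  apply injective_projections; simpl; ring.
Qed.

Lemma Z_real g f p (k : R) (c : C) :
  (forall e, basis_dir e -> dd g p e = RtoC (k * (Re c * Re (dd f p e) + Im c * Im (dd f p e)))) ->
  Z1 g p = Cmult (Cmult (RtoC k) half) (Cplus (Cmult (Cconj c) (Z1 f p)) (Cmult c (Cconj (Zb1 f p)))) /\
  Zb1 g p = Cconj (Z1 g p) /\
  Tf g p = Cmult (Cmult (RtoC k) half) (Cplus (Cmult (Cconj c) (Tf f p)) (Cmult c (Cconj (Tf f p)))).
Proof.
  intro H.
  unfold Z1, Zb1, Tf, dz1, dz2, dzb1, dzb2.
  rewrite !H by (unfold basis_dir; tauto). clear H.
  destruct (dd f p ex1), (dd f p ey1), (dd f p ex2), (dd f p ey2), c.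
  destruct p as [[x1 y1] [x2 y2]]. csplit_cbn.
  repeat split; apply injective_projections; simpl; field.
Qed.

Lemma Lin_real g f p v (k : R) (c : C) :
  (forall e, basis_dir e -> dd g p e = RtoC (k * (Re c * Re (dd f p e) + Im c * Im (dd f p e)))) ->
  Lin g p v = RtoC (k * (Re c * Re (Lin f p v) + Im c * Im (Lin f p v))).
Proof.
  intro H. unfold Lin. rewrite !H by (unfold basis_dir; tauto). clear H.
  destruct (dd f p ex1), (dd f p ey1), (dd f p ex2), (dd f p ey2), c.
  destruct v as [[a b] [c d]]. csplit_all.
  apply injective_projections; simpl; ring.
Qed.

Lemma cder_val f p v d d' : cder f p v d -> d = d' -> cder f p v d'.
Proof. intros H ->; exact H. Qed.

Lemma cder_self f p v d : cder f p v d -> cder f p v (dd f p v).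
Proof. intro H. rewrite (cder_dd _ _ _ _ H). exact H. Qed.

Lemma cder_theta1 w p v : cder (fun q => theta1 q w) p v (theta1 v w).
Proof.
  unfold theta1. eapply cder_val.
  - apply cder_minus; apply cder_mult; [apply cder_snd|apply cder_const|apply cder_fst|apply cder_const].
  - cbv beta. ring.
Qed.

Lemma cder_thetab1 w p v : cder (fun q => thetab1 q w) p v (thetab1 v w).
Proof. unfold thetab1. apply (cder_conj (fun q => theta1 q w)). apply cder_theta1. Qed.

Definition E (phi : Point -> C) (p v w : Point) : C :=
  Cplus (Cmult (dd (Fphi phi) p v) (Cminus (theta1 p w) (Cmult (phi p) (thetab1 p w))))
        (Cmult (Fphi phi p) (Cminus (theta1 v w) (Cplus (Cmult (dd phi p v) (thetab1 p w)) (Cmult (phi p) (thetab1 v w))))).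

Lemma cder_th1phi phi p v w : smooth phi -> Cmod (phi p) < 1 ->
  cder (fun q => theta1_phi phi q w) p v (E phi p v w).
Proof.
  intros Hs Hlt.
  pose proof (smooth_cder phi Hs p v) as Hp.
  pose proof (cder_self _ _ _ _ (cder_F phi p v _ Hlt Hp)) as HF.
  apply cder_self in Hp.
  unfold theta1_phi, E.
  apply (cder_mult (Fphi phi) (fun q => Cminus (theta1 q w) (Cmult (phi q) (thetab1 q w)))); auto.
  apply (cder_minus (fun q => theta1 q w) (fun q => Cmult (phi q) (thetab1 q w))).
  - apply cder_theta1.
  - apply (cder_mult phi (fun q => thetab1 q w)); auto. apply cder_thetab1.
Qed.

Lemma ext_d_formula phi p v w : smooth phi -> Cmod (phi p) < 1 ->
  ext_d (theta1_phi phi) p v w = Cminus (E phi p v w) (E phi p w v).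
Proof.
  intros Hs Hlt. unfold ext_d.
  rewrite (cder_dd _ _ _ _ (cder_th1phi phi p v w Hs Hlt)).
  rewrite (cder_dd _ _ _ _ (cder_th1phi phi p w v Hs Hlt)).
  reflexivity.
Qed.

Lemma F_rel phi p : Cmod (phi p) < 1 ->
  Cmult (Cmult (Fphi phi p) (Fphi phi p)) (Cminus 1 (Cmult (phi p) (Cconj (phi p)))) = 1%C.
Proof.
  intro Hlt. rewrite <- Cmod2_conj.
  pose proof (Cmod_ge_0 (phi p)).
  assert (Hm : 0 < 1 - Cmod (phi p) ^ 2) by nra.
  pose proof (sqrt_lt_R0 _ Hm) as Hs. pose proof (sqrt_sqrt _ (Rlt_le _ _ Hm)) as Hss.
  unfold Fphi. revert Hs Hss. generalize (Cmod (phi p) ^ 2). intros m Hs Hss.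
  revert Hs Hss. generalize (sqrt (1 - m)). intros q Hq Hss.
  unfold Cmult, Cminus, Cplus, Copp, RtoC; cbn [fst snd].
  apply injective_projections; cbn [fst snd].
  - replace (1 + - m) with (q * q) by lra. field. lra.
  - field. lra.
Qed.

Lemma F_nz phi p : Cmod (phi p) < 1 -> Fphi phi p <> 0%C.
Proof.
  intros Hlt H. pose proof (F_rel phi p Hlt) as R. rewrite H in R.
  assert (R2 : (0 * 0 * (1 - phi p * Cconj (phi p)))%C = 0%C) by ring.
  rewrite R2 in R. apply (f_equal fst) in R. simpl in R. lra.
Qed.

Lemma F_conj phi p : Cconj (Fphi phi p) = Fphi phi p.
Proof. unfold Fphi. apply Cconj_RtoC. Qed.

Lemma sub0 (a b : C) : Cminus a b = RtoC 0 -> a = b.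
Proof. intro H. replace a with (Cplus (Cminus a b) b) by ring. rewrite H. ring. Qed.

Lemma eq_mod (x y k r : C) : Cminus x y = Cmult k (Cminus r 1) -> r = 1%C -> x = y.
Proof. intros H Hr. rewrite Hr in H.
  assert (H2 : Cminus x y = 0%C) by (rewrite H; ring).
  replace x with (Cplus (Cminus x y) y) by ring. rewrite H2. ring. Qed.

Lemma struct_eq phi p v w : smooth phi -> S3 p -> Cmod (phi p) < 1 -> tangent p v -> tangent p w ->
  ext_d (theta1_phi phi) p v w =
  Cplus (wedge (theta1_phi phi) (omega_phi phi) p v w)
        (wedge theta (fun q u => Cmult (A_phi phi q) (Cconj (theta1_phi phi q u))) p v w).
Proof.
  intros Hs HS Hlt Hv Hw.
  rewrite ext_d_formula by auto. unfold E.
  rewrite (cder_dd _ _ _ _ (smooth_cder phi Hs p v)), (cder_dd _ _ _ _ (smooth_cder phi Hs p w)).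
  rewrite !decomp by auto.
  unfold wedge, theta1_phi, omega_phi, A_phi, B11, B12, B13, phi0m, thetab1, theta11, phibar. cbv beta.
  rewrite (theta1_vw p v w), (theta1_vw p w v) by auto.
  rewrite Cmod2_conj.
  repeat rewrite ?Cconj_mult, ?Cconj_minus, ?Cconj_plus, ?Cconj_opp, ?Cconj_conj, ?Cconj_Ci, ?F_conj, ?theta_real.
  pose proof (F_rel phi p Hlt) as R. pose proof (F_nz phi p Hlt) as NZ.
  set (F := Fphi phi p) in *. set (ph := phi p) in *.
  set (al := theta1 p v) in *. set (be := theta1 p w) in *.
  set (s := theta p v) in *. set (t := theta p w) in *.
  set (P := Cminus (Tf phi p) (Cmult (Cmult (RtoC 4) Ci) ph)).
  set (X := Cminus (Cmult (Cconj al) be) (Cmult al (Cconj be))).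
  set (Y := Cminus (Cmult t (Cconj al)) (Cmult s (Cconj be))).
  apply (eq_mod _ _ (Copp (Cmult F (Cplus (Cmult (Z1 phi p) X) (Cmult P Y)))) (Cmult (Cmult F F) (Cminus 1 (Cmult ph (Cconj ph))))); [|exact R].
  unfold P, X, Y. clearbody F ph al be s t. clear -NZ. field. exact NZ.
Qed.

Lemma half_inv : half = Cinv (RtoC 2).
Proof. unfold half, Cinv, RtoC; cbn [fst snd]. apply injective_projections; cbn [fst snd]; field. Qed.

Lemma F3 phi p : RtoC (fval phi p ^ 3) = Cmult (Cmult (Fphi phi p) (Fphi phi p)) (Fphi phi p).
Proof. unfold Fphi, fval, Cmult, RtoC; cbn [fst snd]. apply injective_projections; cbn [fst snd]; ring. Qed.

Lemma RtoC_mult a b : RtoC (a * b) = Cmult (RtoC a) (RtoC b).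
Proof. unfold Cmult, RtoC; cbn [fst snd]. apply injective_projections; cbn [fst snd]; ring. Qed.

Lemma dd_phi_e phi p e : smooth phi -> dd phi p e = Lin phi p e.
Proof. intro Hs. apply cder_dd. apply smooth_cder; auto. Qed.

Lemma F_facts phi p : smooth phi -> Cmod (phi p) < 1 ->
  (forall e, basis_dir e -> dd (Fphi phi) p e =
     RtoC (fval phi p ^ 3 * (Re (phi p) * Re (dd phi p e) + Im (phi p) * Im (dd phi p e)))) /\
  (forall v, dd (Fphi phi) p v = Lin (Fphi phi) p v).
Proof.
  intros Hs Hlt.
  assert (H1 : forall e, dd (Fphi phi) p e =
     RtoC (fval phi p ^ 3 * (Re (phi p) * Re (dd phi p e) + Im (phi p) * Im (dd phi p e)))).
  { intro e. apply cder_dd. apply cder_F; auto. apply cder_self with (d := Lin phi p e). apply smooth_cder; auto. }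
  split.
  - intros e _. apply H1.
  - intro v. rewrite (Lin_real (Fphi phi) phi p v (fval phi p ^ 3) (phi p)).
    + apply cder_dd. apply cder_F; auto. apply smooth_cder; auto.
    + intros e _. apply H1.
Qed.

Lemma om_real phi p v : smooth phi -> S3 p -> Cmod (phi p) < 1 -> tangent p v ->
  Cplus (omega_phi phi p v) (Cconj (omega_phi phi p v)) = RtoC 0.
Proof.
  intros Hs HS Hlt Hv.
  destruct (F_facts phi p Hs Hlt) as [HFe HFv].
  destruct (Z_real (Fphi phi) phi p (fval phi p ^ 3) (phi p) HFe) as [Z1F [Zb1F TF]].
  assert (Zbb : Zb1 (phibar phi) p = Cconj (Z1 phi p)).
  { apply Zb1_conj. intros e He. apply cder_dd. apply (cder_conj phi).
    apply cder_self with (d := Lin phi p e). apply smooth_cder; auto. }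
  unfold omega_phi, B11, B12, B13, phi0m, theta11.
  rewrite HFv, decomp by auto.
  rewrite Zbb, Zb1F, TF, Z1F. rewrite F3, half_inv. unfold phibar, thetab1.
  rewrite Cmod2_conj.
  repeat rewrite ?Cconj_mult, ?Cconj_minus, ?Cconj_plus, ?Cconj_opp, ?Cconj_conj, ?Cconj_Ci,
     ?F_conj, ?theta_real, ?Cconj_inv, ?Cconj_RtoC.
  pose proof (F_rel phi p Hlt) as R. pose proof (F_nz phi p Hlt) as NZ.
  set (F := Fphi phi p) in *. set (ph := phi p) in *.
  set (al := theta1 p v) in *. set (s := theta p v) in *.
  set (c := Cplus (Cmult (Cconj ph) (Z1 phi p)) (Cmult ph (Cconj (Zb1 phi p)))).
  apply sub0.
  apply (eq_mod _ _ (Cmult (Cmult F F) (Cplus (Cmult c al) (Cmult (Cconj c) (Cconj al)))) (Cmult (Cmult F F) (Cminus 1 (Cmult ph (Cconj ph))))); [|exact R].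
  unfold c. repeat rewrite ?Cconj_mult, ?Cconj_plus, ?Cconj_conj. clearbody F ph al s. clear -NZ. field. exact NZ.
Qed.

Definition Tp (p : Point) : Point := (Cmult Ci (fst p), Cmult Ci (snd p)).
Definition Xv (p : Point) (a : C) : Point := (Cmult a (Cconj (snd p)), Copp (Cmult a (Cconj (fst p)))).

Lemma Tp_facts p : S3 p -> tangent p (Tp p) /\ theta1 p (Tp p) = RtoC 0 /\ theta p (Tp p) = RtoC 1.
Proof.
  intro Hs. apply S3_real in Hs.
  destruct p as [[x1 y1] [x2 y2]]. unfold tangent, Tp, theta1, theta, half, Cminus in *. csplit_all.
  assert (H2 : 2 * / 2 = 1) by field. set (hh := / 2) in *.
  repeat split; try apply injective_projections; cbn [fst snd]; nsatz.
Qed.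

Lemma Xv_facts p a : S3 p -> tangent p (Xv p a) /\ theta1 p (Xv p a) = a /\ theta p (Xv p a) = RtoC 0.
Proof.
  intro Hs. apply S3_real in Hs. destruct a as [a1 a2].
  destruct p as [[x1 y1] [x2 y2]]. unfold tangent, Xv, theta1, theta, half, Cminus in *. csplit_all.
  assert (H2 : 2 * / 2 = 1) by field. set (hh := / 2) in *.
  repeat split; try apply injective_projections; cbn [fst snd]; nsatz.
Qed.

Lemma W_T phi p : S3 p -> theta1_phi phi p (Tp p) = RtoC 0.
Proof.
  intro Hs. destruct (Tp_facts p Hs) as [_ [H _]].
  unfold theta1_phi, thetab1. rewrite H. rewrite Cconj_RtoC. ring.
Qed.

Lemma W_X phi p c : S3 p -> Cmod (phi p) < 1 ->
  theta1_phi phi p (Xv p (Cmult (Fphi phi p) (Cplus c (Cmult (phi p) (Cconj c))))) = c.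
Proof.
  intros Hs Hlt. destruct (Xv_facts p (Cmult (Fphi phi p) (Cplus c (Cmult (phi p) (Cconj c)))) Hs) as [_ [H _]].
  unfold theta1_phi, thetab1. rewrite H.
  repeat rewrite ?Cconj_mult, ?Cconj_plus, ?Cconj_conj, ?F_conj.
  pose proof (F_rel phi p Hlt) as R.
  set (F := Fphi phi p) in *. set (ph := phi p) in *. clearbody F ph.
  apply (eq_mod _ _ c (Cmult (Cmult F F) (Cminus 1 (Cmult ph (Cconj ph))))); [ring | exact R].
Qed.

Ltac cdest := repeat match goal with x : C |- _ => destruct x end.

Lemma uniq_pt phi om A p : smooth phi -> S3 p -> Cmod (phi p) < 1 ->
  (forall v w, tangent p v -> tangent p w ->
     ext_d (theta1_phi phi) p v w =
     Cplus (wedge (theta1_phi phi) om p v w)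
           (wedge theta (fun q u => Cmult (A q) (Cconj (theta1_phi phi q u))) p v w)) ->
  (forall v, tangent p v -> Cplus (om p v) (Cconj (om p v)) = RtoC 0) ->
  A p = A_phi phi p /\ (forall v, tangent p v -> om p v = omega_phi phi p v).
Proof.
  intros Hs HS Hlt H Hr.
  assert (Heq : forall v w, tangent p v -> tangent p w ->
     Cplus (wedge (theta1_phi phi) om p v w)
           (wedge theta (fun q u => Cmult (A q) (Cconj (theta1_phi phi q u))) p v w) =
     Cplus (wedge (theta1_phi phi) (omega_phi phi) p v w)
           (wedge theta (fun q u => Cmult (A_phi phi q) (Cconj (theta1_phi phi q u))) p v w)).
  { intros v w Hv Hw. rewrite <- H by auto. apply struct_eq; auto. }
  unfold wedge in Heq. cbv beta in Heq.
  set (T := Tp p).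
  set (X1 := Xv p (Cmult (Fphi phi p) (Cplus (RtoC 1) (Cmult (phi p) (Cconj (RtoC 1)))))).
  set (Xi := Xv p (Cmult (Fphi phi p) (Cplus Ci (Cmult (phi p) (Cconj Ci))))).
  destruct (Tp_facts p HS) as [HTt [_ HTth]]. fold T in HTt, HTth.
  pose proof (W_T phi p HS) as HWT. fold T in HWT.
  destruct (Xv_facts p (Cmult (Fphi phi p) (Cplus (RtoC 1) (Cmult (phi p) (Cconj (RtoC 1))))) HS) as [HX1t [_ HX1th]].
  fold X1 in HX1t, HX1th.
  destruct (Xv_facts p (Cmult (Fphi phi p) (Cplus Ci (Cmult (phi p) (Cconj Ci)))) HS) as [HXit [_ HXith]].
  fold Xi in HXit, HXith.
  pose proof (W_X phi p (RtoC 1) HS Hlt) as HW1. fold X1 in HW1.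
  pose proof (W_X phi p Ci HS Hlt) as HWi. fold Xi in HWi.
  assert (HA : A p = A_phi phi p).
  { pose proof (Heq X1 T HX1t HTt) as K1. pose proof (Heq Xi T HXit HTt) as K2.
    rewrite HWT, HW1, HX1th, HTth in K1. rewrite HWT, HWi, HXith, HTth in K2.
    rewrite Cconj_RtoC in K1. rewrite Cconj_Ci in K2.
    revert K1 K2. generalize (om p T) (omega_phi phi p T) (A p) (A_phi phi p) (om p X1) (om p Xi)
      (omega_phi phi p X1) (omega_phi phi p Xi).
    intros; cdest. unfold Cminus in *. unfold Cplus, Cmult, Copp, Cconj, Ci, RtoC in *; cbn [fst snd] in *.
    apply pair_equal_spec in K1. apply pair_equal_spec in K2.
    destruct K1, K2. apply injective_projections; cbn [fst snd]. all: lra. }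
  assert (Hd : forall v, tangent p v ->
     Cminus (om p v) (omega_phi phi p v) =
     Cmult (theta1_phi phi p v) (Cminus (om p X1) (omega_phi phi p X1))).
  { intros v Hv. pose proof (Heq v X1 Hv HX1t) as K.
    rewrite HW1, HX1th, HA in K. apply sub0.
    match type of K with ?l = ?r => transitivity (Copp (Cminus l r)); [ring | rewrite K; ring] end. }
  split; [exact HA|].
  assert (Hy : om p X1 = omega_phi phi p X1).
  { pose proof (Hd Xi HXit) as K. rewrite HWi in K.
    pose proof (Hr X1 HX1t) as Q1. pose proof (Hr Xi HXit) as Q2.
    pose proof (om_real phi p X1 Hs HS Hlt HX1t) as Q3.
    pose proof (om_real phi p Xi Hs HS Hlt HXit) as Q4.
    revert K Q1 Q2 Q3 Q4. generalize (om p X1) (om p Xi) (omega_phi phi p X1) (omega_phi phi p Xi).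
    intros; cdest. unfold Cminus in *. unfold Cplus, Cmult, Copp, Cconj, Ci, RtoC in *; cbn [fst snd] in *.
    apply pair_equal_spec in K. apply pair_equal_spec in Q1. apply pair_equal_spec in Q2.
    apply pair_equal_spec in Q3. apply pair_equal_spec in Q4.
    destruct K, Q1, Q2, Q3, Q4. apply injective_projections; cbn [fst snd]; lra. }
  intros v Hv. pose proof (Hd v Hv) as K. rewrite Hy in K.
  apply sub0. rewrite K. ring.
Qed.

Theorem corollary4p2 (phi : Point -> C)
  (Hsmooth : smooth phi)
  (Hlt : forall p, S3 p -> Cmod (phi p) < 1) :
  forall (om : cform1) (A : Point -> C),
    is_connection_torsion theta (theta1_phi phi) om A <->
    ((forall p, S3 p -> forall v, tangent p v -> om p v = omega_phi phi p v) /\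
     (forall p, S3 p -> A p = A_phi phi p)).
Proof.
  intros om A. split.
  - intro H. split.
    + intros p Hp v Hv.
      refine (proj2 (uniq_pt phi om A p Hsmooth Hp (Hlt p Hp) _ _) v Hv).
      * intros v0 w0 Hv0 Hw0. exact (proj1 (H p Hp v0 w0 Hv0 Hw0)).
      * intros v0 Hv0. exact (proj2 (H p Hp v0 v0 Hv0 Hv0)).
    + intros p Hp.
      refine (proj1 (uniq_pt phi om A p Hsmooth Hp (Hlt p Hp) _ _)).
      * intros v0 w0 Hv0 Hw0. exact (proj1 (H p Hp v0 w0 Hv0 Hw0)).
      * intros v0 Hv0. exact (proj2 (H p Hp v0 v0 Hv0 Hv0)).
  - intros [Hom HA] p Hp v w Hv Hw. split.
    + rewrite (struct_eq phi p v w Hsmooth Hp (Hlt p Hp) Hv Hw).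
      unfold wedge. rewrite (Hom p Hp v Hv), (Hom p Hp w Hw), (HA p Hp). reflexivity.
    + rewrite (Hom p Hp v Hv). apply om_real; auto.
Qed.
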